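(* Let $n,d,d_k$ be positive integers, $X\in\mathbb{R}^{n\times d}$, $W_Q,W_K\in\mathbb{R}^{d\times d_k}$, $E\in\mathbb{R}^{n\times n}$, and let $P\in\mathbb{R}^{d\times d}$ be an orthogonal projector. Put $B=W_QW_K^\top$, $X_P=XP$, $G_Q=X^\top E X W_K/\sqrt{d_k}$, $G_K=X^\top E^\top X W_Q/\sqrt{d_k}$, and for $\eta_Q,\eta_K\ge0$ let $B^+=(W_Q-\eta_QG_Q)(W_K-\eta_KG_K)^\top$ and $\Delta Z_P=X_P P(B^+-B)P X_P^\top/\sqrt{d_k}$. Suppose there are constants $\lambda_Q,\lambda_K\ge0$ such that $$\|XW_SW_S^\top P\|_F\le\lambda_S\|X_P\|_F\|W_S\|_{\mathrm{op}}^2,\qquad S\in\{Q,K\}.$$ Then $$\|\Delta Z_P\|_F\le\frac{\|X_P\|_{\mathrm{op}}^2\|X_P\|_F^2\|E\|_{\mathrm{op}}}{d_k}\Big(\eta_Q\lambda_K\|W_K\|_{\mathrm{op}}^2+\eta_K\lambda_Q\|W_Q\|_{\mathrm{op}}^2\Big)+R_2,$$ where $R_2=\eta_Q\eta_K\|X_P\|_{\mathrm{op}}^2\|X_P\|_F^2\|E\|_{\mathrm{op}}^2\|XW_K\|_F\|XW_Q\|_F/d_k^{3/2}$. In particular (using $\|X_P\|_{\mathrm{op}}\le\|X_P\|_F$), the first-order part of $\|\Delta Z_P\|_F$ is at most $\frac{\|X_P\|_F^4\|E\|_{\mathrm{op}}}{d_k}\big(\eta_Q\lambda_K\|W_K\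|_{\mathrm{op}}^2+\eta_K\lambda_Q\|W_Q\|_{\mathrm{op}}^2\big)$.
   Context: $\|\cdot\|_F$ is the Frobenius norm, $\|\cdot\|_{\mathrm{op}}$ the spectral norm; an orthogonal projector satisfies $P=P^\top=P^2$. *)

(* Defs.v *)
From HB Require Import structures.
From mathcomp Require Import all_boot all_order all_algebra.
From mathcomp Require Import all_classical all_reals.
Set Implicit Arguments. Unset Strict Implicit. Unset Printing Implicit Defensive.
Import Order.TTheory GRing.Theory Num.Theory.
Local Open Scope ring_scope.
Local Open Scope classical_set_scope.

Definition frob {R : realType} {m n : nat} (A : 'M[R]_(m, n)) : R :=
  Num.sqrt (\sum_(i < m) \sum_(j < n) A i j ^+ 2).

Definition opnorm {R : realType} {m n : nat} (A : 'M[R]_(m, n)) : R :=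
  sup [set frob (A *m v) | v in [set v : 'cV[R]_n | frob v = 1]].

Definition orth_proj {R : realType} {d : nat} (P : 'M[R]_d) : Prop :=
  P^T = P /\ P *m P = P.

(* Main.v *)
Require Import Defs.
From HB Require Import structures.
From mathcomp Require Import all_boot all_order all_algebra.
From mathcomp Require Import all_classical all_reals.
From mathcomp Require Import ring lra.
Import Order.TTheory GRing.Theory Num.Theory.
Local Open Scope ring_scope.
Section H.
Context {R : realType}.

Lemma cs (I : finType) (a b : I -> R) :
  (\sum_i a i * b i) ^+ 2 <= (\sum_i a i ^+ 2) * (\sum_i b i ^+ 2).
Proof.
have H : 0 <= \sum_i \sum_j (a i * b j - a j * b i) ^+ 2.
  by apply: sumr_ge0 => i _; apply: sumr_ge0 => j _; exact: sqr_ge0.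
have E : \sum_i \sum_j (a i * b j - a j * b i) ^+ 2 =
   (\sum_i \sum_j (a i ^+ 2 * b j ^+ 2)) + (\sum_i \sum_j (a j ^+ 2 * b i ^+ 2))
   - 2 * \sum_i \sum_j ((a i * b i) * (a j * b j)).
  rewrite mulr_sumr -sumrN -!big_split /=; apply: eq_bigr => i _.
  rewrite mulr_sumr -sumrN -!big_split /=; apply: eq_bigr => j _.
  ring.
have E1 : \sum_i \sum_j (a i ^+ 2 * b j ^+ 2) = (\sum_i a i ^+ 2) * (\sum_i b i ^+ 2).
  by rewrite mulr_suml; apply: eq_bigr => i _; rewrite mulr_sumr.
have E2 : \sum_i \sum_j (a j ^+ 2 * b i ^+ 2) = (\sum_i a i ^+ 2) * (\sum_i b i ^+ 2).
  by rewrite exchange_big /= E1.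
have E3 : \sum_i \sum_j ((a i * b i) * (a j * b j)) = (\sum_i a i * b i) ^+ 2.
  by rewrite expr2 mulr_suml; apply: eq_bigr => i _; rewrite mulr_sumr.
rewrite E E1 E2 E3 in H.
rewrite -subr_ge0; move: H; set x := _ * _; set y := _ ^+ 2.
have -> : x + x - 2 * y = 2 * (x - y) by ring.
by rewrite pmulr_rge0.
Qed.


Definition fs {m n} (A : 'M[R]_(m, n)) := \sum_(i < m) \sum_(j < n) A i j ^+ 2.

Lemma fs_ge0 {m n} (A : 'M[R]_(m, n)) : 0 <= fs A.
Proof. by apply: sumr_ge0 => i _; apply: sumr_ge0 => j _; exact: sqr_ge0. Qed.

Lemma frob_ge0 {m n} (A : 'M[R]_(m, n)) : 0 <= frob A.
Proof. exact: sqrtr_ge0. Qed.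

Lemma frob_sq {m n} (A : 'M[R]_(m, n)) : frob A ^+ 2 = fs A.
Proof. by rewrite /frob sqr_sqrtr // fs_ge0. Qed.

Lemma frob_le {m n} (A : 'M[R]_(m, n)) c : 0 <= c -> fs A <= c ^+ 2 -> frob A <= c.
Proof.
move=> c0 h; rewrite /frob -(ger0_norm c0) -sqrtr_sqr.
exact: ler_wsqrtr.
Qed.

Lemma frob_eq0 {m n} (A : 'M[R]_(m, n)) : frob A = 0 -> A = 0.
Proof.
move=> /eqP; rewrite sqrtr_eq0 => h.
have h0 : fs A = 0 by apply/eqP; rewrite eq_le h fs_ge0.
apply/matrixP => i j; rewrite mxE.
have h1 : \sum_(j < n) A i j ^+ 2 = 0.
  move: h0; rewrite /fs => /psumr_eq0P; apply => // k _.
  by apply: sumr_ge0 => l _; exact: sqr_ge0.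
have : A i j ^+ 2 = 0.
  by move: h1 => /psumr_eq0P; apply => // k _; exact: sqr_ge0.
by move/eqP; rewrite sqrf_eq0 => /eqP.
Qed.

Lemma frob_scale {m n} (A : 'M[R]_(m, n)) k : frob (k *: A) = `|k| * frob A.
Proof.
rewrite /frob -sqrtr_sqr -sqrtrM ?sqr_ge0 //; congr Num.sqrt.
rewrite mulr_sumr; apply: eq_bigr => i _; rewrite mulr_sumr; apply: eq_bigr => j _.
by rewrite mxE exprMn.
Qed.

Lemma frob_tr {m n} (A : 'M[R]_(m, n)) : frob A^T = frob A.
Proof.
rewrite /frob exchange_big; congr Num.sqrt; apply: eq_bigr => i _;
  apply: eq_bigr => j _; by rewrite mxE.
Qed.

Lemma frob_opp {m n} (A : 'M[R]_(m, n)) : frob (- A) = frob A.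
Proof. by rewrite -scaleN1r frob_scale normrN normr1 mul1r. Qed.

Lemma le_sq (x y : R) : 0 <= y -> x ^+ 2 <= y ^+ 2 -> x <= y.
Proof.
move=> y0 h; apply: (le_trans (ler_norm x)).
rewrite -sqrtr_sqr -(ger0_norm y0) -sqrtr_sqr; exact: ler_wsqrtr.
Qed.

Lemma frob_dot {m n} (A B : 'M[R]_(m, n)) :
  \sum_i \sum_j A i j * B i j <= frob A * frob B.
Proof.
apply: le_sq; first by rewrite mulr_ge0 ?frob_ge0.
rewrite exprMn !frob_sq /fs !pair_bigA.
exact: cs.
Qed.

Lemma frob_add {m n} (A B : 'M[R]_(m, n)) : frob (A + B) <= frob A + frob B.
Proof.
apply: frob_le; first by rewrite addr_ge0 ?frob_ge0.
have -> : fs (A + B) = fs A + 2 * (\sum_i \sum_j A i j * B i j) + fs B.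
  rewrite /fs mulr_sumr -!big_split /=; apply: eq_bigr => i _.
  rewrite mulr_sumr -!big_split /=; apply: eq_bigr => j _.
  rewrite mxE; ring.
rewrite -!frob_sq.
have := frob_dot A B; move: (\sum_i _) => x hx.
have : 2 * x <= 2 * (frob A * frob B) by rewrite ler_pM2l.
move=> h2; set a := frob A in h2 *; set b := frob B in h2 *.
rewrite sqrrD; rewrite -mulr_natl.
lra.
Qed.

Lemma frob_sub {m n} (A B : 'M[R]_(m, n)) : frob (A - B) <= frob A + frob B.
Proof. by rewrite -(frob_opp B); exact: frob_add. Qed.


Lemma frob_mul {m k n} (A : 'M[R]_(m, k)) (B : 'M[R]_(k, n)) :
  frob (A *m B) <= frob A * frob B.
Proof.
apply: frob_le; first by rewrite mulr_ge0 ?frob_ge0.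
rewrite exprMn !frob_sq.
have -> : fs A * fs B = \sum_i \sum_j ((\sum_l A i l ^+ 2) * (\sum_l B l j ^+ 2)).
  rewrite /fs mulr_suml; apply: eq_bigr => i _.
  rewrite exchange_big /= mulr_sumr; apply: eq_bigr => j _ //.
apply: ler_sum => i _; apply: ler_sum => j _; rewrite mxE; exact: cs.
Qed.

Lemma frob_1x1 (M : 'M[R]_(1, 1)) : frob M = `|M 0 0|.
Proof. by rewrite /frob !big_ord1 sqrtr_sqr. Qed.

Lemma frob_col {m n} (M : 'M[R]_(m, n)) j : fs (col j M) = \sum_i M i j ^+ 2.
Proof. by rewrite /fs; apply: eq_bigr => i _; rewrite big_ord1 mxE. Qed.

Lemma fs_cols {m n} (M : 'M[R]_(m, n)) : fs M = \sum_j fs (col j M).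
Proof. by rewrite {1}/fs exchange_big; apply: eq_bigr => j _; rewrite frob_col. Qed.

Lemma col_bound {m k n} (A : 'M[R]_(m, k)) c :
  0 <= c -> (forall v : 'cV[R]_k, frob (A *m v) <= c * frob v) ->
  forall B : 'M[R]_(k, n), frob (A *m B) <= c * frob B.
Proof.
move=> c0 h B; apply: frob_le; first by rewrite mulr_ge0 ?frob_ge0.
rewrite exprMn frob_sq !fs_cols mulr_sumr; apply: ler_sum => j _.
rewrite -!frob_sq colE -mulmxA -colE -exprMn.
apply: lerXn2r; rewrite ?nnegrE ?frob_ge0 ?mulr_ge0 //. exact: frob_ge0.
Qed.


Lemma frob0 {m n} : frob (0 : 'M[R]_(m, n)) = 0.
Proof.
rewrite /frob big1 ?sqrtr0 // => i _; rewrite big1 // => j _.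
by rewrite mxE expr0n.
Qed.

Local Open Scope classical_set_scope.

Definition opS {m n} (A : 'M[R]_(m, n)) :=
  [set frob (A *m v) | v in [set v : 'cV[R]_n | frob v = 1]].

Lemma opS_ub {m n} (A : 'M[R]_(m, n)) : ubound (opS A) (frob A).
Proof.
move=> x [w /= w1 <-]; apply: le_trans (frob_mul A w) _; by rewrite w1 mulr1.
Qed.

Lemma opnorm_ub {m n} (A : 'M[R]_(m, n)) (v : 'cV[R]_n) :
  frob (A *m v) <= opnorm A * frob v.
Proof.
have [v0|vn0] := eqVneq (frob v) 0.
  by rewrite (frob_eq0 v v0) mulmx0 !frob0 mulr0.
have c0 : 0 < frob v by rewrite lt_def vn0 frob_ge0.
set u := (frob v)^-1 *: v.
have u1 : frob u = 1.
  by rewrite frob_scale ger0_norm ?invr_ge0 ?frob_ge0 // mulVf.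
have hS : opS A (frob (A *m u)) by exists u.
have le := sup_upper_bound (conj (ex_intro _ _ hS) (ex_intro _ _ (opS_ub A))) hS.
move: le; rewrite /u -scalemxAr frob_scale ger0_norm ?invr_ge0 ?frob_ge0 //.
rewrite -/(opnorm A) => le.
rewrite -[frob (A *m v)](mulVKf vn0) [opnorm A * _]mulrC ler_pM2l //; exact: le.
Qed.

Lemma opnorm_ge0 {m n} (A : 'M[R]_(m, n)) : 0 <= opnorm A.
Proof.
have [[x Sx]|N] := pselect (opS A !=set0).
  have le := sup_upper_bound (conj (ex_intro _ _ Sx) (ex_intro _ _ (opS_ub A))) Sx.
  apply: le_trans le; case: Sx => w _ <-; exact: frob_ge0.
have -> : opnorm A = sup set0.
  rewrite /opnorm; congr sup; apply/seteqP; split => x // Sx; exfalso; apply: N.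
  by exists x.
by rewrite sup0.
Qed.

Lemma opnorm_le_frob {m n} (A : 'M[R]_(m, n)) : opnorm A <= frob A.
Proof.
have [[x Sx]|N] := pselect (opS A !=set0).
  apply: ge_sup; [by exists x | exact: opS_ub].
have -> : opnorm A = sup set0.
  rewrite /opnorm; congr sup; apply/seteqP; split => x // Sx; exfalso; apply: N.
  by exists x.
by rewrite sup0 frob_ge0.
Qed.

Lemma op_left {m k n} (A : 'M[R]_(m, k)) (B : 'M[R]_(k, n)) :
  frob (A *m B) <= opnorm A * frob B.
Proof. apply: col_bound; [exact: opnorm_ge0 | exact: opnorm_ub]. Qed.

Lemma frob_sqcol {n} (w : 'cV[R]_n) : frob (w^T *m w) = frob w ^+ 2.
Proof.
rewrite frob_1x1 frob_sq /fs mxE ger0_norm; last first.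
  by apply: sumr_ge0 => i _; rewrite !mxE -expr2 sqr_ge0.
by apply: eq_bigr => i _; rewrite big_ord1 mxE expr2.
Qed.

Lemma optr_ub {m n} (A : 'M[R]_(m, n)) (v : 'cV[R]_m) :
  frob (A^T *m v) <= opnorm A * frob v.
Proof.
set w := A^T *m v.
have h : frob w ^+ 2 <= frob v * (opnorm A * frob w).
  rewrite -frob_sqcol.
  have -> : w^T *m w = v^T *m (A *m w) by rewrite /w trmx_mul trmxK !mulmxA.
  apply: le_trans (frob_mul _ _) _; rewrite frob_tr; apply: ler_wpM2l; [exact: frob_ge0 | exact: opnorm_ub].
have [w0|wn0] := eqVneq (frob w) 0.
  by rewrite w0 mulr_ge0 ?opnorm_ge0 ?frob_ge0.
have c0 : 0 < frob w by rewrite lt_def wn0 frob_ge0.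
move: h; rewrite expr2 mulrA [frob v * _]mulrC ler_pM2r //.
Qed.

Lemma optr_left {m k n} (A : 'M[R]_(k, m)) (B : 'M[R]_(k, n)) :
  frob (A^T *m B) <= opnorm A * frob B.
Proof. apply: col_bound; [exact: opnorm_ge0 | exact: optr_ub]. Qed.

End H.
Theorem corollary2 (R : realType) (n d dk : nat)
  (Hn : (0 < n)%N) (Hd : (0 < d)%N) (Hdk : (0 < dk)%N)
  (X : 'M[R]_(n, d)) (WQ WK : 'M[R]_(d, dk)) (E : 'M[R]_n) (P : 'M[R]_d)
  (HP : orth_proj P) (etaQ etaK lamQ lamK : R)
  (HetaQ : 0 <= etaQ) (HetaK : 0 <= etaK) (HlamQ : 0 <= lamQ) (HlamK : 0 <= lamK)
  (HQ : frob (X *m WQ *m WQ^T *m P) <= lamQ * frob (X *m P) * opnorm WQ ^+ 2)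
  (HK : frob (X *m WK *m WK^T *m P) <= lamK * frob (X *m P) * opnorm WK ^+ 2) :
  let sdk := Num.sqrt (dk%:R : R) in
  let B := WQ *m WK^T in
  let XP := X *m P in
  let GQ := sdk^-1 *: (X^T *m E *m X *m WK) in
  let GK := sdk^-1 *: (X^T *m E^T *m X *m WQ) in
  let Bp := (WQ - etaQ *: GQ) *m (WK - etaK *: GK)^T in
  let dZP := sdk^-1 *: (XP *m P *m (Bp - B) *m P *m XP^T) in
  let R2 := etaQ * etaK * opnorm XP ^+ 2 * frob XP ^+ 2 * opnorm E ^+ 2
            * frob (X *m WK) * frob (X *m WQ) / (dk%:R * sdk) in
  frob dZP <= opnorm XP ^+ 2 * frob XP ^+ 2 * opnorm E / dk%:R
              * (etaQ * lamK * opnorm WK ^+ 2 + etaK * lamQ * opnorm WQ ^+ 2) + R2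
  /\
  frob dZP <= frob XP ^+ 4 * opnorm E / dk%:R
              * (etaQ * lamK * opnorm WK ^+ 2 + etaK * lamQ * opnorm WQ ^+ 2) + R2.
Proof.
move=> s B XP GQ GK Bp dZP R2.
case: HP => Pt PP.
have PPl : forall k (A : 'M[R]_(k, d)), A *m P *m P = A *m P.
  by move=> k A; rewrite -mulmxA PP.
have s0 : 0 < s by rewrite sqrtr_gt0 ltr0n.
have hd : dk%:R = s ^+ 2 by rewrite sqr_sqrtr // ler0n.
set G0Q := X^T *m E *m X *m WK.
set G0K := X^T *m E^T *m X *m WQ.
have eBp : Bp - B = (etaQ * etaK * (s^-1 * s^-1)) *: (G0Q *m G0K^T)
      - (etaQ * s^-1) *: (G0Q *m WK^T) - (etaK * s^-1) *: (WQ *m G0K^T).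
  rewrite /Bp /B /GQ /GK -/G0Q -/G0K.
  rewrite linearB /= !linearZ /= mulmxDl !mulmxDr.
  rewrite -!scalemxAl -!scalemxAr !mulNmx !mulmxN.
  move: (G0Q *m G0K^T) (G0Q *m WK^T) (WQ *m G0K^T) (WQ *m WK^T) => M1 M2 M3 M4.
  apply/matrixP => i j; rewrite !mxE; ring.
have XPP : XP *m P = XP by rewrite /XP PPl.
have PXPt : P *m XP^T = XP^T by rewrite /XP trmx_mul Pt mulmxA PP.
have edZ : dZP = s^-1 *: ((etaQ * etaK * (s^-1 * s^-1)) *: (XP *m (G0Q *m G0K^T) *m XP^T)
      - (etaQ * s^-1) *: (XP *m (G0Q *m WK^T) *m XP^T)
      - (etaK * s^-1) *: (XP *m (WQ *m G0K^T) *m XP^T)).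
  rewrite /dZP XPP -mulmxA PXPt eBp.
  by rewrite !mulmxBr !mulmxBl -!scalemxAr -!scalemxAl.
set o := opnorm XP; set f := frob XP; set e := opnorm E.
have o0 : 0 <= o := opnorm_ge0 _.
have f0 : 0 <= f := frob_ge0 _.
have e0 : 0 <= e := opnorm_ge0 _.
have fXX : frob (XP *m XP^T) <= f * f by apply: le_trans (frob_mul _ _) _; rewrite frob_tr.
have oXX : frob (XP *m XP^T) <= o * f by apply: le_trans (op_left _ _) _; rewrite frob_tr.
set k1 := frob (X *m WK *m WK^T *m P).
set k2 := frob (X *m WQ *m WQ^T *m P).
have b1 : frob (XP *m (G0Q *m WK^T) *m XP^T) <= (o * o * e * f) * k1.
  have -> : XP *m (G0Q *m WK^T) *m XP^T
      = XP *m (XP^T *m (E *m ((X *m WK *m WK^T *m P) *m XP^T))).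
    by rewrite /XP /G0Q !trmx_mul ?trmxK ?Pt !mulmxA ?PPl.
  have h1 : frob ((X *m WK *m WK^T *m P) *m XP^T) <= k1 * f.
    by apply: le_trans (frob_mul _ _) _; rewrite frob_tr.
  have h2 := le_trans (op_left E _) (ler_wpM2l e0 h1).
  have h3 := le_trans (optr_left XP _) (ler_wpM2l o0 h2).
  have h4 := le_trans (op_left XP _) (ler_wpM2l o0 h3).
  apply: le_trans h4 _; rewrite le_eqVlt; apply/orP; left; apply/eqP; ring.
have b2 : frob (XP *m (WQ *m G0K^T) *m XP^T) <= (o * o * e * f) * k2.
  have -> : XP *m (WQ *m G0K^T) *m XP^T
      = XP *m ((X *m WQ *m WQ^T *m P)^T *m (E *m (XP *m XP^T))).
    by rewrite /XP /G0K !trmx_mul ?trmxK ?Pt !mulmxA ?PPl.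
  have h2 := le_trans (op_left E _) (ler_wpM2l e0 oXX).
  have h3 : frob ((X *m WQ *m WQ^T *m P)^T *m (E *m (XP *m XP^T))) <= k2 * (e * (o * f)).
    apply: le_trans (frob_mul _ _) _; rewrite frob_tr; apply: ler_wpM2l; [exact: frob_ge0 | exact: h2].
  have h4 := le_trans (op_left XP _) (ler_wpM2l o0 h3).
  apply: le_trans h4 _; rewrite le_eqVlt; apply/orP; left; apply/eqP; ring.
set q := frob (X *m WK); set r := frob (X *m WQ).
have b3 : frob (XP *m (G0Q *m G0K^T) *m XP^T) <= o * o * e * e * q * r * f * f.
  have -> : XP *m (G0Q *m G0K^T) *m XP^T
      = XP *m (XP^T *m (E *m ((X *m WK) *m ((X *m WQ)^T *m (E *m (XP *m XP^T)))))).
    by rewrite /XP /G0Q /G0K !trmx_mul ?trmxK ?Pt !mulmxA ?PPl.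
  have g1 := le_trans (op_left E _) (ler_wpM2l e0 fXX).
  have g2 : frob ((X *m WQ)^T *m (E *m (XP *m XP^T))) <= r * (e * (f * f)).
    apply: le_trans (frob_mul _ _) _; rewrite frob_tr; apply: ler_wpM2l; [exact: frob_ge0 | exact: g1].
  have g3 := le_trans (frob_mul (X *m WK) _) (ler_wpM2l (frob_ge0 _) g2).
  have g4 := le_trans (op_left E _) (ler_wpM2l e0 g3).
  have g5 := le_trans (optr_left XP _) (ler_wpM2l o0 g4).
  have g6 := le_trans (op_left XP _) (ler_wpM2l o0 g5).
  apply: le_trans g6 _; rewrite -/q le_eqVlt; apply/orP; left; apply/eqP; ring.
have si0 : 0 <= s^-1 by rewrite invr_ge0 ltW.
have c10 : 0 <= etaQ * s^-1 by rewrite mulr_ge0.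
have c20 : 0 <= etaK * s^-1 by rewrite mulr_ge0.
have c30 : 0 <= etaQ * etaK * (s^-1 * s^-1) by rewrite !mulr_ge0.
have main : frob dZP <= s^-1 * ((etaQ * etaK * (s^-1 * s^-1)) * (o * o * e * e * q * r * f * f)
     + (etaQ * s^-1) * ((o * o * e * f) * k1) + (etaK * s^-1) * ((o * o * e * f) * k2)).
  rewrite edZ frob_scale ger0_norm //; apply: ler_wpM2l => //.
  apply: le_trans (frob_sub _ _) _; apply: lerD; last first.
    by rewrite frob_scale ger0_norm //; apply: ler_wpM2l.
  apply: le_trans (frob_sub _ _) _; apply: lerD.
    by rewrite frob_scale ger0_norm //; apply: ler_wpM2l.
  by rewrite frob_scale ger0_norm //; apply: ler_wpM2l.
set oK := opnorm WK; set oQ := opnorm WQ.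
have X0 : 0 <= o * o * e * f by rewrite !mulr_ge0.
have k1b : (o * o * e * f) * k1 <= (o * o * e * f) * (lamK * f * oK ^+ 2).
  by apply: ler_wpM2l.
have k2b : (o * o * e * f) * k2 <= (o * o * e * f) * (lamQ * f * oQ ^+ 2).
  by apply: ler_wpM2l.
have sn0 : s != 0 by rewrite gt_eqF.
have goal1 : frob dZP <= o ^+ 2 * f ^+ 2 * e / dk%:R
     * (etaQ * lamK * oK ^+ 2 + etaK * lamQ * oQ ^+ 2) + R2.
  apply: le_trans main _.
  apply: le_trans (_ : _ <= s^-1 * ((etaQ * etaK * (s^-1 * s^-1)) * (o * o * e * e * q * r * f * f)
     + (etaQ * s^-1) * ((o * o * e * f) * (lamK * f * oK ^+ 2))
     + (etaK * s^-1) * ((o * o * e * f) * (lamQ * f * oQ ^+ 2)))) _.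
    apply: ler_wpM2l => //; apply: lerD; first apply: lerD => //.
      by apply: ler_wpM2l.
    by apply: ler_wpM2l.
  rewrite /R2 hd le_eqVlt; apply/orP; left; apply/eqP.
  rewrite -/q -/r -/o -/f -/e; field; exact: sn0.
split => //.
apply: le_trans goal1 _; rewrite lerD2r.
have ofb : o ^+ 2 <= f ^+ 2.
  by apply: lerXn2r; rewrite ?nnegrE //; exact: opnorm_le_frob.
have K0 : 0 <= f ^+ 2 * e / dk%:R * (etaQ * lamK * oK ^+ 2 + etaK * lamQ * oQ ^+ 2).
  by rewrite !mulr_ge0 ?addr_ge0 ?mulr_ge0 ?invr_ge0 ?ler0n ?exprn_ge0 ?opnorm_ge0.
have := ler_wpM2r K0 ofb.
set K := _ * (_ + _).
have -> : o ^+ 2 * f ^+ 2 * e / dk%:R * (etaQ * lamK * oK ^+ 2 + etaK * lamQ * oQ ^+ 2) = o ^+ 2 * K.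
  by rewrite /K; ring.
have -> : f ^+ 4 * e / dk%:R * (etaQ * lamK * oK ^+ 2 + etaK * lamQ * oQ ^+ 2) = f ^+ 2 * K.
  by rewrite /K; ring.
by [].
Qed.
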